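(* Let $A_1,\dots,A_k$ be $2\times2$ real matrices with all entries strictly positive and norm $<1$, $d_i\in\mathbb R^2$, $T_i(x)=A_ix+d_i$, and assume $T_i(D)\subset D$ for all $i$, where $D$ is the closed unit disc. Then for every $\theta\in\mathbb{PR}^1$, every $n\ge0$ and every $a_1,\dots,a_{n+1}\in\{1,\dots,k\}$, \[ |a_1\cdots a_{n+1}|_\theta-|a_1\cdots a_n|_\theta=|a_{n+1}|_{\phi_{a_n\cdots a_1}(\theta)}. \]
   Context: $\mathbb{PR}^1$ is the space of lines through the origin in $\mathbb R^2$ (directions). For $\theta\in\mathbb{PR}^1$, $\pi_\theta$ is orthogonal projection onto the line through the origin perpendicular to $\theta$ (so fibres are lines in direction $\theta$); $\pi_\theta(D)$ is a segment of length 2. For a word $w=a_1\cdots a_n$, $T_w=T_{a_1}\circ\cdots\circ T_{a_n}$ and $D_w=T_w(D)$ (with $D_\emptyset=D$). The length function is $|w|_\theta=-\log_2\big(|\pi_\theta(D_w)|/2\big)$, where $|\cdot|$ denotes length of an interval. For each $i$, $\phi_i:\mathbb{PR}^1\to\mathbb{PR}^1$ sends a line $\ell$ to $A_i^{-1}(\ell)$, and $\phi_{a_n\cdots a_1}=\phi_{a_n}\circ\cdots\circ\phi_{a_1}$ (the identity for $n=0$). *)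

(* Defs.v *)
From HB Require Import structures.
From mathcomp Require Import all_boot all_order all_algebra.
From mathcomp Require Import all_classical all_reals all_analysis.
Set Implicit Arguments. Unset Strict Implicit. Unset Printing Implicit Defensive.
Import Order.TTheory GRing.Theory Num.Theory.
Local Open Scope classical_set_scope.
Local Open Scope ring_scope.

Section Defs.
Variable R : realType.

Definition i0 : 'I_2 := @Ordinal 2 0 isT.
Definition i1 : 'I_2 := @Ordinal 2 1 isT.

Definition dot2 (x y : 'cV[R]_2) : R := x i0 ord0 * y i0 ord0 + x i1 ord0 * y i1 ord0.
Definition norm2 (x : 'cV[R]_2) : R := Num.sqrt (dot2 x x).

Definition disc : set 'cV[R]_2 := [set x | norm2 x <= 1].

Definition opnorm (M : 'M[R]_2) : R := sup [set norm2 (M *m x) | x in disc].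

(* Length of a segment S in the plane = its diameter. *)
Definition seglen (S : set 'cV[R]_2) : R :=
  sup [set r | exists p q, S p /\ S q /\ r = norm2 (p - q)].

(* A direction theta in PR^1 is represented by a nonzero vector v spanning it.
   perp v spans the line through 0 perpendicular to v. *)
Definition perp (v : 'cV[R]_2) : 'cV[R]_2 :=
  \col_(i < 2) (if i == i0 then - v i1 ord0 else v i0 ord0).

Definition proj (v x : 'cV[R]_2) : 'cV[R]_2 :=
  (dot2 x (perp v) / dot2 (perp v) (perp v)) *: perp v.

Definition log2 (x : R) : R := ln x / ln 2.

Variable k : nat.
Variables (A : 'I_k -> 'M[R]_2) (d : 'I_k -> 'cV[R]_2).

Definition T (i : 'I_k) (x : 'cV[R]_2) : 'cV[R]_2 := A i *m x + d i.

Definition Tw (w : seq 'I_k) (x : 'cV[R]_2) : 'cV[R]_2 := foldr T x w.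

Definition Dw (w : seq 'I_k) : set 'cV[R]_2 := Tw w @` disc.

Definition wlen (w : seq 'I_k) (v : 'cV[R]_2) : R :=
  - log2 (seglen (proj v @` Dw w) / 2).

(* phi_i(l) = A_i^{-1}(l); phi_{a_n ... a_1} = phi_{a_n} o ... o phi_{a_1},
   so for w = a_1 ... a_n, phi_{rev w} applies phi_{a_1} first. *)
Definition phi (i : 'I_k) (v : 'cV[R]_2) : 'cV[R]_2 := invmx (A i) *m v.
Definition phiw (w : seq 'I_k) (v : 'cV[R]_2) : 'cV[R]_2 :=
  foldl (fun x i => phi i x) v w.

End Defs.

(* Main.v *)
Require Import Defs.
From HB Require Import structures.
From mathcomp Require Import all_boot all_order all_algebra.
From mathcomp Require Import all_classical all_reals all_analysis.
From mathcomp Require Import ring lra.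
Set Implicit Arguments. Unset Strict Implicit. Unset Printing Implicit Defensive.
Import Order.TTheory GRing.Theory Num.Theory.
Local Open Scope classical_set_scope.
Local Open Scope ring_scope.

Section H.
Variable R : realType.
Implicit Types (x y u b : 'cV[R]_2) (M : 'M[R]_2).

Lemma ord2 (i : 'I_2) : i = i0 \/ i = i1.
Proof. case: i => [[|[|n]] Hi]; [left|right|by []]; exact/val_inj. Qed.

Lemma cV2P x y : x i0 ord0 = y i0 ord0 -> x i1 ord0 = y i1 ord0 -> x = y.
Proof. move=> h0 h1; apply/matrixP => i j; rewrite (ord1 j); by case: (ord2 i) => ->. Qed.

Lemma sum2 (F : 'I_2 -> R) : \sum_(j < 2) F j = F i0 + F i1.
Proof.
rewrite !big_ord_recl big_ord0 addr0.
have -> : (ord0 : 'I_2) = i0 by apply/val_inj.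
by have -> : (lift i0 ord0 : 'I_2) = i1 by apply/val_inj.
Qed.

Lemma mul2E M x i : (M *m x) i ord0 = M i i0 * x i0 ord0 + M i i1 * x i1 ord0.
Proof.
rewrite mxE !big_ord_recl big_ord0 addr0.
have -> : (ord0 : 'I_2) = i0 by apply/val_inj.
by have -> : (lift i0 ord0 : 'I_2) = i1 by apply/val_inj.
Qed.

Lemma dot2D x y u : dot2 (x + y) u = dot2 x u + dot2 y u.
Proof. rewrite /dot2 !mxE; ring. Qed.
Lemma dot2N x u : dot2 (- x) u = - dot2 x u.
Proof. rewrite /dot2 !mxE; ring. Qed.
Lemma dot2Z s x u : dot2 (s *: x) u = s * dot2 x u.
Proof. rewrite /dot2 !mxE; ring. Qed.
Lemma dot2C x u : dot2 x u = dot2 u x.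
Proof. rewrite /dot2; ring. Qed.
Lemma dot2M M x u : dot2 (M *m x) u = dot2 x (M^T *m u).
Proof. rewrite /dot2 !mul2E !mxE; ring. Qed.
Lemma dot2_ge0 x : 0 <= dot2 x x.
Proof. rewrite /dot2; nra. Qed.

Lemma dot2_gt0 x : x != 0 -> 0 < dot2 x x.
Proof.
move=> hx; rewrite lt_neqAle dot2_ge0 andbT; apply/eqP => h.
have h0 : x i0 ord0 = 0 by move: h; rewrite /dot2; nra.
have h1 : x i1 ord0 = 0 by move: h; rewrite /dot2; nra.
by move/eqP: hx; apply; apply: cV2P; rewrite ?mxE.
Qed.

Lemma norm2_ge0 x : 0 <= norm2 x.
Proof. exact: sqrtr_ge0. Qed.
Lemma norm2_gt0 x : x != 0 -> 0 < norm2 x.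
Proof. by move=> hx; rewrite /norm2 sqrtr_gt0 dot2_gt0. Qed.
Lemma norm2_sq x : norm2 x ^+ 2 = dot2 x x.
Proof. by rewrite /norm2 sqr_sqrtr ?dot2_ge0. Qed.

Lemma norm2Z s x : norm2 (s *: x) = `|s| * norm2 x.
Proof.
rewrite /norm2 dot2Z dot2C dot2Z mulrA -expr2 sqrtrM ?sqr_ge0 //.
by rewrite sqrtr_sqr.
Qed.

Lemma CS x b : `|dot2 x b| <= norm2 x * norm2 b.
Proof.
have h : dot2 x b ^+ 2 <= (norm2 x * norm2 b) ^+ 2.
  rewrite exprMn !norm2_sq /dot2; have := sqr_ge0 (x i0 ord0 * b i1 ord0 - x i1 ord0 * b i0 ord0); nra.
have ha := norm2_ge0 x; have hb := norm2_ge0 b.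
have hab := mulr_ge0 ha hb; move: h hab; set p := _ * _; set q := dot2 _ _ => h hab.
rewrite ler_norml; apply/andP; split; nra.
Qed.

Lemma perp_neq0 x : x != 0 -> perp x != 0.
Proof.
move=> hx; apply/eqP => h; move/eqP: hx; apply.
have e0 := congr1 (fun z : 'cV[R]_2 => z i0 ord0) h.
have e1 := congr1 (fun z : 'cV[R]_2 => z i1 ord0) h.
move: e0 e1; rewrite /= !mxE /= => e0 e1.
apply: cV2P; rewrite mxE //; lra.
Qed.

Lemma perpM M y : M^T *m perp (M *m y) =
  (M i0 i0 * M i1 i1 - M i0 i1 * M i1 i0) *: perp y.
Proof.
apply: cV2P; rewrite !mxE !sum2 ?mxE ?sum2 ?mxE /=; ring.
Qed.

Lemma mul_neq0 M x : M \in unitmx -> x != 0 -> M *m x != 0.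
Proof.
move=> hM hx; apply/eqP => h; move/eqP: hx; apply.
by rewrite -(mulKmx hM x) h mulmx0.
Qed.

Lemma seglen_aff (f : 'cV[R]_2 -> 'cV[R]_2) M (c v : 'cV[R]_2) :
  (forall x, f x = M *m x + c) -> v != 0 ->
  seglen (Defs.proj v @` (f @` @disc R)) = 2 * norm2 (M^T *m perp v) / norm2 (perp v).
Proof.
move=> hf hv.
set u := perp v; set b := M^T *m u.
have hU := norm2_gt0 (perp_neq0 hv); rewrite -/u in hU.
set U := norm2 u in hU *; set B := norm2 b.
have hB := norm2_ge0 b; rewrite -/B in hB.
have key : forall x y, norm2 (Defs.proj v (f x) - Defs.proj v (f y)) =
   `|dot2 x b - dot2 y b| / U.
  move=> x y; rewrite /proj -/u -scalerBl norm2Z -/U -mulrBl !hf.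
  rewrite !dot2D !dot2M -/b -norm2_sq normrM.
  rewrite -/u -/U (@ger0_norm _ (U ^- 2)); last by rewrite invr_ge0 exprn_ge0 // ltW.
  have -> : dot2 x b + dot2 c u - (dot2 y b + dot2 c u) = dot2 x b - dot2 y b by ring.
  field; lra.
rewrite /seglen; set E := (X in sup X).
have Em : E (2 * B / U).
  rewrite /E.
  pose x := B^-1 *: b.
  have dx : @disc R x.
    rewrite /disc /= /x norm2Z -/B normfV (ger0_norm hB).
    by case: (eqVneq B 0) => [->|hB0]; rewrite ?mulr0 // mulVf.
  have dnx : @disc R (- x).
    rewrite /disc /= -scaleN1r norm2Z normrN normr1 mul1r; exact: dx.
  exists (Defs.proj v (f x)), (Defs.proj v (f (- x))); split; first by exists (f x) => //; exists x.
  split; first by exists (f (- x)) => //; exists (- x).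
  rewrite key dot2N /x dot2Z -norm2_sq -/B opprK.
  have -> : B^-1 * B ^+ 2 = B by case: (eqVneq B 0) => [->|hB0]; [rewrite invr0 mul0r|field].
  rewrite ger0_norm; last lra. field; lra.
have ub : ubound E (2 * B / U).
  move=> r [p [q [[_ [x dx <-] <-] [[_ [y dy <-] <-] ->]]]].
  rewrite key ler_pM2r ?invr_gt0 //.
  have h1 := CS x b; have h2 := CS y b.
  move: dx dy; rewrite /disc /= => dx dy.
  have hx := norm2_ge0 x; have hy := norm2_ge0 y.
  rewrite -/B in h1 h2.
  apply: (le_trans (ler_normB _ _)). nra.
apply/le_anti/andP; split; first by apply: ge_sup => //; exists (2 * B / U).
by apply: ub_le_sup => //; exists (2 * B / U).
Qed.

End H.

Lemma half_eq (R : realType) (x y : R) : 2 * x / y / 2 = x / y.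
Proof. have h : (2:R) != 0 by rewrite pnatr_eq0. by rewrite mulrAC [2 * x]mulrC mulfK. Qed.

Section M.
Variables (R : realType) (k : nat) (A : 'I_k -> 'M[R]_2) (d : 'I_k -> 'cV[R]_2).

Definition Aw (w : seq 'I_k) : 'M[R]_2 := foldr (fun i M => A i *m M) 1%:M w.

Lemma Tw_aff w : exists c, forall x, Tw A d w x = Aw w *m x + c.
Proof.
elim: w => [|a w [c IH]]; first by exists 0 => x; rewrite /= mul1mx addr0.
exists (A a *m c + d a) => x; rewrite /= IH /T mulmxDr mulmxA addrA.
by [].
Qed.

Lemma Aw_foldr w (M : 'M[R]_2) : foldr (fun i N => A i *m N) M w = Aw w *m M.
Proof. elim: w => [|a w IH] /=; first by rewrite mul1mx. by rewrite IH mulmxA. Qed.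

Hypothesis Hinv : forall i, A i \in unitmx.

Lemma Aw_unit w : Aw w \in unitmx.
Proof. elim: w => [|a w IH] /=; first exact: unitmx1. by rewrite unitmx_mul Hinv. Qed.

Lemma phiw_spec w v : Aw w *m phiw A w v = v.
Proof.
elim: w v => [|a w IH] v /=; first by rewrite mul1mx.
by rewrite -mulmxA IH /phi mulKVmx.
Qed.

Lemma wlen_eq w v : v != 0 ->
  wlen A d w v = - log2 (norm2 ((Aw w)^T *m perp v) / norm2 (perp v)).
Proof.
move=> hv; case: (Tw_aff w) => c hc.
rewrite /wlen /Dw (seglen_aff hc hv); congr (- log2 _).
exact: half_eq.
Qed.

End M.

Lemma ln_frac (R : realType) (a b c : R) : 0 < a -> 0 < b -> 0 < c ->
  ln (a * b / c) = ln a + ln b - ln c.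
Proof.
move=> ha hb hc.
have hab : 0 < a * b by rewrite mulr_gt0.
have hc' : 0 < c^-1 by rewrite invr_gt0.
rewrite (@lnM _ (a * b) c^-1) ?posrE //.
rewrite (@lnM _ a b) ?posrE // (@lnV _ c) ?posrE //.
Qed.

Unset Implicit Arguments.
Theorem lemma4p2 (R : realType) (k : nat)
  (A : 'I_k -> 'M[R]_2) (d : 'I_k -> 'cV[R]_2)
  (Hpos : forall i p q, 0 < A i p q)
  (Hnorm : forall i, opnorm (A i) < 1)
  (Hinv : forall i, A i \in unitmx)
  (HT : forall i, T A d i @` @disc R `<=` @disc R)
  (v : 'cV[R]_2) (hv : v != 0) (w : seq 'I_k) (a : 'I_k) :
  wlen A d (rcons w a) v - wlen A d w v = wlen A d [:: a] (phiw A w v).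
Proof.
set y := phiw A w v.
have hy : Aw A w *m y = v := phiw_spec Hinv w v.
have yn0 : y != 0.
  apply/eqP => h; move/eqP: hv; apply; by rewrite -hy h mulmx0.
rewrite !wlen_eq //.
have -> : Aw A (rcons w a) = Aw A w *m A a by rewrite /Aw foldr_rcons Aw_foldr mulmx1.
have -> : Aw A [:: a] = A a by rewrite /= mulmx1.
rewrite trmx_mul -mulmxA.
set u := perp v.
have hu : u != 0 by exact: perp_neq0.
have hb0 : (Aw A w)^T *m u != 0 by apply: mul_neq0; rewrite ?unitmx_tr ?Aw_unit.
have hb := perpM (Aw A w) y; rewrite hy -/u in hb.
move: hb0; rewrite hb; set s := (_ - _) => hb0.
have hs : s != 0 by apply: contraNneq hb0 => ->; rewrite scale0r.
rewrite -scalemxAr !norm2Z.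
have hy' := perp_neq0 yn0.
have hX : 0 < norm2 ((A a)^T *m perp y) by apply/norm2_gt0/mul_neq0; rewrite ?unitmx_tr.
have hY := norm2_gt0 hy'.
have hU := norm2_gt0 hu.
have ht : 0 < `|s| by rewrite normr_gt0.
move: hX hY hU ht.
set X := norm2 _; set Y := norm2 (perp y); set U := norm2 u; set t := `|s|.
move=> hX hY hU ht.
have hXY : ln (X / Y) = ln X - ln Y.
  have hY' : 0 < Y^-1 by rewrite invr_gt0.
  by rewrite (@lnM _ X Y^-1) ?posrE // (@lnV _ Y) ?posrE.
rewrite /Defs.log2 hXY !ln_frac //.
have h2 : ln (2 : R) != 0 by rewrite gt_eqF // ln_gt0 // ltr1n.
field; exact: h2.
Qed.
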